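(* Let $g:\mathbb{N}\to\mathbb{R}^+$ be non-increasing with $g(0)=1$, let $F$ be the decayed sum induced by $g$, and let $G(x)=\sum_{i=0}^{x-1}g(i)$. If there exists an $\varepsilon$-differentially private online algorithm that at time step $j$ outputs $\hat F(x_1,\ldots,x_j)$ and achieves $(\delta,\gamma)$-utility with respect to $F$, then $$\delta\ge\frac12\,G\!\left(\Omega\!\left(\frac{\log(1/\gamma)}{\varepsilon}\right)\right).$$
   Context: The decayed sum induced by $g$ is $F(x_1,\ldots,x_j)=\sum_{i=1}^j x_i\,g(j-i)$. Online model: at each time step $i$ a randomized online algorithm receives $x_i\in[0,1]$ and outputs a real number $\hat F(x_1,\ldots,x_i)$. It is $\varepsilon$-differentially private (under continual observation) if for all $T$, all measurable $S\subseteq\mathbb{R}^T$, all inputs $x_1,\ldots,x_T\in[0,1]$, all $j\le T$ and all $x_j'\in[0,1]$, $\Pr[(\hat F(x_1,\ldots,x_j,\ldots,x_k))_{k=1}^T\in S]\le e^{\varepsilon}\Pr[(\hat F(x_1,\ldots,x_j',\ldots,x_k))_{k=1}^T\in S]$ (second sequence computed on the input with $x_j$ replaced by $x_j'$). It achieves $(\delta,\gamma)$-utility with respect to $F$ if for all inputs and all $j$, $\Pr[|\hat F(x_1,\ldots,x_j)-F(x_1,\ldots,x_j)|>\delta]<\gamma$. *)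

(* Defs.v *)
From HB Require Import structures.
From mathcomp Require Import all_boot all_order all_algebra.
From mathcomp Require Import all_classical all_reals all_analysis.
Set Implicit Arguments. Unset Strict Implicit. Unset Printing Implicit Defensive.
Import Order.TTheory GRing.Theory Num.Theory.
Local Open Scope classical_set_scope.
Local Open Scope ring_scope.

Section DecayedSum.
Variable R : realType.

(* Decayed sum F(x_1..x_j) = sum_{i=1}^j x_i g(j-i); the sequence s is
   [x_1; ...; x_j] (0-indexed: s`_i = x_{i+1}). *)
Definition decayed_sum (g : nat -> R) (s : seq R) : R :=
  \sum_(i < size s) s`_i * g (size s - 1 - i)%N.

Definition Gsum (g : nat -> R) (x : nat) : R := \sum_(i < x) g i.

Definition in01 (s : seq R) : bool := all (fun a => (0 <= a <= 1)) s.

(* Borel sigma-algebra on R^T = ('I_T -> R): generated by measurable boxes. *)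
Definition box_sets (T : nat) : set (set ('I_T -> R)) :=
  [set S | exists B : 'I_T -> set R,
      (forall i, measurable (B i)) /\ S = [set f | forall i, B i (f i)]].

Definition borelRT (T : nat) (S : set ('I_T -> R)) : Prop := <<s @box_sets T >> S.

(* A randomized online algorithm: a probability space (Omega, P) of random
   coins and, for every prefix (x_1,...,x_i) of the input, the output
   hat F(x_1,...,x_i) as a function of the coins.  The output at time i only
   depends on the input received so far. *)

Variables (d : measure_display) (Omega : measurableType d).

Definition out_seq (A : seq R -> Omega -> R) (T : nat) (x : seq R)
  : Omega -> ('I_T -> R) := fun w i => A (take i.+1 x) w.

Arguments out_seq : clear implicits.
Definition online_alg_measurable (A : seq R -> Omega -> R) : Prop :=
  forall s, in01 s -> measurable_fun setT (A s).

Definition diff_private (P : probability Omega R) (A : seq R -> Omega -> R)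
    (eps : R) : Prop :=
  forall (T : nat) (S : set ('I_T -> R)) (x : seq R) (j : nat) (xj' : R),
    borelRT S -> size x = T -> in01 x -> (j < T)%N -> 0 <= xj' <= 1 ->
    (P (out_seq A T x @^-1` S)
      <= (expR eps)%:E * P (out_seq A T (set_nth 0%R x j xj') @^-1` S))%E.

Definition has_utility (P : probability Omega R) (A : seq R -> Omega -> R)
    (F : seq R -> R) (delta gamma : R) : Prop :=
  forall (x : seq R) (j : nat), in01 x -> (0 < j <= size x)%N ->
    (P [set w | (delta < `| A (take j x) w - F (take j x) |)%R] < gamma%:E)%E.

End DecayedSum.

(* Main.v *)
Require Import Defs.
From HB Require Import structures.
From mathcomp Require Import all_boot all_order all_algebra.
From mathcomp Require Import all_classical all_reals all_analysis.
From mathcomp Require Import Rstruct.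
From mathcomp Require Import zify lra.
Import Order.TTheory GRing.Theory Num.Theory.
Local Open Scope classical_set_scope.
Local Open Scope ring_scope.

Section Helpers.
Variable R : realType.

Lemma ds_zero (g : nat -> R) k : decayed_sum g (nseq k 0) = 0.
Proof.
rewrite /decayed_sum big1 // => i _; by rewrite nth_nseq; case: ifP; rewrite mul0r.
Qed.

Lemma ds_one (g : nat -> R) k : decayed_sum g (nseq k 1) = Gsum g k.
Proof.
rewrite /decayed_sum /Gsum size_nseq.
rewrite (reindex_inj rev_ord_inj) /=.
apply: eq_bigr => i _; rewrite nth_nseq.
have -> : (k - i.+1 < k)%N by rewrite ltn_subrL; case: k i => [[]|].
rewrite mul1r; congr g.
case: i => i /= ?; lia.
Qed.

Definition hyb k m : seq R := nseq m 1 ++ nseq (k - m) 0.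

Lemma hyb_size k m : (m <= k)%N -> size (hyb k m) = k.
Proof. by move=> h; rewrite /hyb size_cat !size_nseq subnKC. Qed.

Lemma hyb_in01 k m : in01 (hyb k m).
Proof.
rewrite /in01 all_cat; apply/andP; split; apply/allP => x;
  by move/nseqP => [-> _]; rewrite ?ler01 ?lexx.
Qed.

Lemma hyb_step k m : (m < k)%N -> set_nth 0 (hyb k m) m 1 = hyb k m.+1.
Proof.
rewrite /hyb; elim: m k => [|m IH] [|k] //= h.
  by rewrite subSS subn0.
by rewrite subSS IH // subSS.
Qed.


Variables (d : measure_display) (Omega : measurableType d).

Lemma group_priv (P : probability Omega R) A eps k (S : set ('I_k -> R)) :
  diff_private P A eps -> borelRT S ->
  forall m, (m <= k)%N ->
  (P (out_seq A (T:=k) (hyb k 0) @^-1` S) <=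
     ((expR eps) ^+ m)%:E * P (out_seq A (T:=k) (hyb k m) @^-1` S))%E.
Proof.
move=> dp bS; elim=> [|m IH] hm.
  by rewrite expr0 mul1e.
apply: le_trans; first exact: (IH (ltnW hm)).
have := dp k S (hyb k m) m 1 bS (@hyb_size k m (ltnW hm)) (hyb_in01 k m) hm.
rewrite ler01 lexx => /(_ isT); rewrite hyb_step // => h.
rewrite exprSr EFinM -muleA.
apply: lee_wpmul2l => //; rewrite lee_fin; apply: exprn_ge0; exact: expR_ge0.
Qed.

End Helpers.

Theorem theorem7 :
  exists (c gamma0 : Rdefinitions.R), 0 < c /\ 0 < gamma0 /\
  forall (g : nat -> Rdefinitions.R) (eps delta gamma : Rdefinitions.R)
    (d : measure_display) (Omega : measurableType d)
    (P : probability Omega Rdefinitions.R)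
    (A : seq Rdefinitions.R -> Omega -> Rdefinitions.R),
    (forall i, 0 < g i) -> (forall i, g i.+1 <= g i) -> g 0%N = 1 ->
    0 < eps -> 0 < gamma -> gamma <= gamma0 ->
    online_alg_measurable A ->
    diff_private P A eps ->
    has_utility P A (decayed_sum g) delta gamma ->
    delta >= 2^-1 * Gsum g (Num.truncn (c * ln (gamma^-1) / eps)).
Proof.
exists (2^-1), (4^-1); split; first by rewrite invr_gt0.
split; first by rewrite invr_gt0.
move=> g eps delta gamma d Omega P A gpos gdec g0 epos gpos' gle mA dp ut.
have g1 : gamma < 1 by apply: (le_lt_trans gle); lra.
case Ek: (Num.truncn _) => [|k].
  rewrite /Gsum big_ord0 mulr0.
  rewrite leNgt; apply/negP => dneg.
  have := ut [:: 0] 1%N; rewrite /in01 /= lexx ler01 => /(_ isT isT).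
  set S := [set w | _].
  have -> : S = setT.
    apply/seteqP; split => // w _; rewrite /S /=.
    exact: (lt_le_trans dneg).
  rewrite probability_setT lte_fin => /(lt_trans g1); by rewrite ltxx.
rewrite leNgt; apply/negP => dlt.
set G := Gsum g k.+1.
set I := `[- delta, delta].
pose B (i : 'I_k.+1) : set Rdefinitions.R := if i == ord_max then [set` I] else setT.
pose Sb : set ('I_k.+1 -> Rdefinitions.R) := [set f | forall i, B i (f i)].
have bS : borelRT Sb.
  apply: sub_sigma_algebra; exists B; split => // i.
  rewrite /B; case: ifP => _; [exact: measurable_itv | exact: measurableT].
have pre : forall x, out_seq A (T:=k.+1) x @^-1` Sb = A (take k.+1 x) @^-1` [set` I].
  move=> x; apply/seteqP; split => w /=.
    by move/(_ ord_max); rewrite /B eqxx.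
  move=> h i; rewrite /B; case: eqP => // ->; exact: h.
have hgroup := @group_priv _ _ _ P A eps k.+1 Sb dp bS k.+1 (leqnn k.+1).
rewrite !pre /hyb subn0 subnn cats0 cat0s !take_nseq ?minnn in hgroup.
have ex0 : hyb Rdefinitions.R k.+1 0 = nseq k.+1 0 by rewrite /hyb /= ?subn0.
have exk : hyb Rdefinitions.R k.+1 k.+1 = nseq k.+1 1 by rewrite /hyb subnn cats0.
have M0 : measurable (A (nseq k.+1 0) @^-1` [set` I]).
  rewrite -[X in measurable X]setTI.
  have hi : in01 (nseq k.+1 (0:Rdefinitions.R)) by rewrite -ex0 hyb_in01.
  exact: (mA _ hi measurableT _ (measurable_itv I)).
have Mk : measurable (A (nseq k.+1 1) @^-1` [set` I]).
  rewrite -[X in measurable X]setTI.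
  have hi : in01 (nseq k.+1 (1:Rdefinitions.R)) by rewrite -exk hyb_in01.
  exact: (mA _ hi measurableT _ (measurable_itv I)).
have u0 := ut (nseq k.+1 0) k.+1.
rewrite -ex0 hyb_in01 ex0 size_nseq leqnn take_nseq ?minnn in u0.
rewrite ds_zero in u0.
have {}u0 := u0 isT isT.
have e0 : [set w | delta < `|A (nseq k.+1 0) w - 0|] = ~` (A (nseq k.+1 0) @^-1` [set` I]).
  apply/seteqP; split => w /=; rewrite subr0 in_itv /= -ler_norml ltNge;
    by move/negP.
rewrite e0 probability_setC // in u0.
have uk := ut (nseq k.+1 1) k.+1.
rewrite -exk hyb_in01 exk size_nseq leqnn take_nseq ?minnn in uk.
rewrite ds_one in uk.
have {}uk := uk isT isT.
have Mbk : measurable [set w | delta < `|A (nseq k.+1 1) w - Gsum g k.+1|].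
  have -> : [set w | delta < `|A (nseq k.+1 1) w - Gsum g k.+1|] =
     ~` (A (nseq k.+1 1) @^-1` [set` `[Gsum g k.+1 - delta, Gsum g k.+1 + delta]]).
    apply/seteqP; split => w /=; rewrite in_itv /= -ler_distl ltNge; by move/negP.
  apply: measurableC.
  rewrite -[X in measurable X]setTI.
  have hi : in01 (nseq k.+1 (1:Rdefinitions.R)) by rewrite -exk hyb_in01.
  exact: (mA _ hi measurableT _ (measurable_itv _)).
have sub : A (nseq k.+1 1) @^-1` [set` I] `<=` [set w | delta < `|A (nseq k.+1 1) w - Gsum g k.+1|].
  move=> w /=; rewrite in_itv /= -ler_norml => ha.
  have h1 : Gsum g k.+1 - A (nseq k.+1 1) w <= `|A (nseq k.+1 1) w - Gsum g k.+1|.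
    by rewrite distrC; exact: ler_norm.
  have h2 := ler_norm (A (nseq k.+1 1) w).
  rewrite -/G in h1 dlt *; lra.
have pk := le_lt_trans (le_measure P (mem_set Mk) (mem_set Mbk) sub) uk.
set E := expR eps ^+ k.+1.
have lng : 0 <= ln (gamma^-1) by apply: ln_ge0; rewrite invf_ge1 //; lra.
have hk : (k.+1)%:R <= 2^-1 * ln (gamma^-1) / eps.
  rewrite -Ek truncn_le; apply: divr_ge0; [apply: mulr_ge0 => //; lra | lra].
rewrite ler_pdivlMr // in hk.
have E2 : E ^+ 2 <= gamma^-1.
  rewrite /E -exprM -expRM_natl.
  have -> : gamma^-1 = expR (ln (gamma^-1)) by rewrite lnK // posrE invr_gt0.
  rewrite ler_expR natrM; lra.
have E2' : E ^+ 2 * gamma <= 1.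
  rewrite -(ler_pM2r gpos') mulVf ?lt0r_neq0 // in E2.
have E0 : 0 <= E by apply: exprn_ge0; exact: expR_ge0.
have [r0 e0'] : exists r, P (A (nseq k.+1 0) @^-1` [set` I]) = r%:E.
  exists (fine (P (A (nseq k.+1 0) @^-1` [set` I]))); rewrite fineK // ge0_fin_numE //.
  by apply: le_lt_trans (probability_le1 P M0) _; exact: ltry.
have [rk ek'] : exists r, P (A (nseq k.+1 1) @^-1` [set` I]) = r%:E.
  exists (fine (P (A (nseq k.+1 1) @^-1` [set` I]))); rewrite fineK // ge0_fin_numE //.
  by apply: le_lt_trans (probability_le1 P Mk) _; exact: ltry.
have rk0 : 0 <= rk by rewrite -lee_fin -ek'.
rewrite e0' ek' -EFinM lee_fin in hgroup.
rewrite e0' -EFinB lte_fin in u0.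
have {}pk : rk < gamma by rewrite -lte_fin -ek'; exact: pk.
have : E * rk <= E * gamma by apply: ler_wpM2l => //; exact: ltW.
rewrite -/E in hgroup.
nra.
all: by [].
Qed.
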